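(* Let $f\colon X\to X$ be a homeomorphism of a metric space $X$. Every isolated set $\Lambda$ of $f$ admits a (discrete) catenary pseudo-metric.
   Context: An $f$-invariant set $\Lambda$ is isolated if there is a compact neighborhood $N$ of $\Lambda$ (an isolating neighborhood) such that $f^n(x)\in N$ for all $n\in\mathbb{Z}$ implies $x\in\Lambda$. For $\mathrm d\colon N\times N\to\mathbb{R}$, set $\ddot{\mathrm d}(x,y)=\mathrm d(f(x),f(y))-2\mathrm d(x,y)+\mathrm d(f^{-1}(x),f^{-1}(y))$ whenever all these points lie in $N$. A catenary pseudo-metric for $\Lambda$ is a continuous pseudo-metric $\mathrm d\colon N\times N\to\mathbb{R}$, with $N$ an isolating neighborhood of $\Lambda$, such that $\ddot{\mathrm d}=\mathrm d$ wherever defined, and $\mathrm d(x,y)=0$ if and only if $x=y$ or $x,y\in\Lambda$. *)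

(* Defs.v *)
From Stdlib Require Import Reals List ZArith.
Open Scope R_scope.

Definition is_metric {X : Type} (dist : X -> X -> R) : Prop :=
  (forall x y, 0 <= dist x y) /\
  (forall x y, dist x y = 0 <-> x = y) /\
  (forall x y, dist x y = dist y x) /\
  (forall x y z, dist x z <= dist x y + dist y z).

Definition is_open {X : Type} (dist : X -> X -> R) (U : X -> Prop) : Prop :=
  forall x, U x -> exists r, 0 < r /\ forall y, dist x y < r -> U y.

Definition is_compact {X : Type} (dist : X -> X -> R) (K : X -> Prop) : Prop :=
  forall (I : Type) (U : I -> X -> Prop),
    (forall i, is_open dist (U i)) ->
    (forall x, K x -> exists i, U i x) ->
    exists l : list I, forall x, K x -> exists i, In i l /\ U i x.

Definition is_nbhd {X : Type} (dist : X -> X -> R) (N L : X -> Prop) : Prop :=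
  exists U, is_open dist U /\ (forall x, L x -> U x) /\ (forall x, U x -> N x).

Definition continuous_map {X : Type} (dist : X -> X -> R) (f : X -> X) : Prop :=
  forall x eps, 0 < eps -> exists delta, 0 < delta /\
    forall y, dist x y < delta -> dist (f x) (f y) < eps.

Definition is_homeomorphism {X : Type} (dist : X -> X -> R) (f g : X -> X) : Prop :=
  (forall x, g (f x) = x) /\ (forall x, f (g x) = x) /\
  continuous_map dist f /\ continuous_map dist g.

Definition iterZ {X : Type} (f g : X -> X) (n : Z) (x : X) : X :=
  match n with
  | Z0 => x
  | Zpos p => Nat.iter (Pos.to_nat p) f x
  | Zneg p => Nat.iter (Pos.to_nat p) g x
  end.

Definition invariant {X : Type} (f g : X -> X) (L : X -> Prop) : Prop :=
  forall x, L x <-> L (f x).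

Definition isolating_nbhd {X : Type} (dist : X -> X -> R) (f g : X -> X)
    (L N : X -> Prop) : Prop :=
  is_compact dist N /\ is_nbhd dist N L /\
  forall x, (forall n : Z, N (iterZ f g n x)) -> L x.

Definition isolated_set {X : Type} (dist : X -> X -> R) (f g : X -> X)
    (L : X -> Prop) : Prop :=
  invariant f g L /\ exists N, isolating_nbhd dist f g L N.

Definition pseudo_metric_on {X : Type} (N : X -> Prop) (d : X -> X -> R) : Prop :=
  (forall x, N x -> d x x = 0) /\
  (forall x y, N x -> N y -> d x y = d y x) /\
  (forall x y z, N x -> N y -> N z -> d x z <= d x y + d y z).

Definition continuous_on_sq {X : Type} (dist : X -> X -> R) (N : X -> Prop)
    (d : X -> X -> R) : Prop :=
  forall x y eps, N x -> N y -> 0 < eps -> exists delta, 0 < delta /\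
    forall x' y', N x' -> N y' -> dist x x' < delta -> dist y y' < delta ->
      Rabs (d x' y' - d x y) < eps.

Definition ddot {X : Type} (f g : X -> X) (d : X -> X -> R) (x y : X) : R :=
  d (f x) (f y) - 2 * d x y + d (g x) (g y).

Definition catenary_pseudo_metric {X : Type} (dist : X -> X -> R) (f g : X -> X)
    (L N : X -> Prop) (d : X -> X -> R) : Prop :=
  isolating_nbhd dist f g L N /\
  pseudo_metric_on N d /\ continuous_on_sq dist N d /\
  (forall x y, N x -> N y -> N (f x) -> N (f y) -> N (g x) -> N (g y) ->
     ddot f g d x y = d x y) /\
  (forall x y, N x -> N y -> (d x y = 0 <-> (x = y \/ (L x /\ L y)))).

(* Main.v *)
Require Import Defs.
From Coquelicot Require Import Coquelicot.
From Stdlib Require Import Reals Lra Lia List Classical ZArith.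
Open Scope R_scope.
Module P1m.

Ltac mins := unfold Rmin in *; repeat match goal with
  | |- context [Rle_dec ?a ?b] => destruct (Rle_dec a b)
  | H : context [Rle_dec ?a ?b] |- _ => destruct (Rle_dec a b)
  end.

Section Part1.
Variable X : Type.
Variable dist : X -> X -> R.
Hypothesis Hm : is_metric dist.
Variable N : X -> Prop.

Lemma dpos x y : 0 <= dist x y. Proof. apply Hm. Qed.
Lemma dsym x y : dist x y = dist y x. Proof. apply Hm. Qed.
Lemma dtri x y z : dist x z <= dist x y + dist y z. Proof. apply Hm. Qed.
Lemma dzero x y : dist x y = 0 <-> x = y. Proof. apply Hm. Qed.

Definition D x y := Rmin (dist x y) 1.
Lemma D_pos x y : 0 <= D x y. Proof. unfold D; pose proof (dpos x y); mins; lra. Qed.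
Lemma D_le1 x y : D x y <= 1. Proof. unfold D; mins; lra. Qed.
Lemma D_le x y : D x y <= dist x y. Proof. unfold D; mins; lra. Qed.
Lemma D_sym x y : D x y = D y x. Proof. unfold D; rewrite dsym; reflexivity. Qed.
Lemma D_tri x y z : D x z <= D x y + D y z.
Proof. unfold D; pose proof (dtri x y z); pose proof (dpos x y); pose proof (dpos y z); mins; lra. Qed.
Lemma D_xx x : D x x = 0.
Proof. unfold D; assert (dist x x = 0) by (apply dzero; auto); rewrite H; mins; lra. Qed.
Lemma D_pos_neq x y : x <> y -> 0 < D x y.
Proof. intros H; unfold D; pose proof (dpos x y).
  assert (dist x y <> 0) by (intro E; apply H; apply dzero; auto). mins; lra. Qed.

Definition E z r := r = -1 \/ exists w, N w /\ r = - D z w.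
Lemma E_bound z : bound (E z).
Proof. exists 0. intros r [->|[w [_ ->]]]. lra. pose proof (D_pos z w); lra. Qed.
Lemma E_ne z : exists r, E z r. Proof. exists (-1); left; auto. Qed.
Definition H z := - proj1_sig (completeness (E z) (E_bound z) (E_ne z)).
Lemma H_lub z : is_lub (E z) (- H z).
Proof. unfold H; rewrite Ropp_involutive; apply proj2_sig. Qed.

Lemma H_ge0 z : 0 <= H z.
Proof. destruct (H_lub z) as [_ Hl]. assert (-H z <= 0); [|lra].
  apply Hl. intros r [->|[w [_ ->]]]. lra. pose proof (D_pos z w); lra. Qed.
Lemma H_le1 z : H z <= 1.
Proof. destruct (H_lub z) as [Hu _]. assert (-1 <= - H z); [|lra]. apply Hu; left; auto. Qed.
Lemma H_N w : N w -> H w = 0.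
Proof. intros Nw. pose proof (H_ge0 w). destruct (H_lub w) as [Hu _].
  assert (0 <= - H w); [|lra]. apply Hu. right. exists w; split; auto. rewrite D_xx; lra. Qed.
Lemma H_lip y z : H z <= H y + D y z.
Proof. destruct (H_lub y) as [_ Hl]. destruct (H_lub z) as [Hu _].
  assert (- H y <= - H z + D y z); [|lra]. apply Hl.
  intros r [->|[w [Nw ->]]].
  - assert (-1 <= - H z) by (apply Hu; left; auto). pose proof (D_pos y z); lra.
  - assert (- D z w <= - H z) by (apply Hu; right; exists w; auto).
    pose proof (D_tri z y w). rewrite (D_sym z y) in H1. lra. Qed.

Hypothesis Hc : is_compact dist N.

Lemma closed_sep z : ~ N z -> exists r, 0 < r /\ forall w, N w -> r <= dist z w.
Proof. intros nz.
  destruct (Hc nat (fun k w => / INR (S k) < dist z w)) as [l Hl].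
  - intros k w Hw. exists (dist z w - / INR (S k)). split. lra.
    intros y Hy. pose proof (dtri z y w). rewrite (dsym y w) in H0. lra.
  - intros w Nw. assert (z <> w) by (intros ->; auto).
    assert (0 < dist z w). { pose proof (dpos z w).
      assert (dist z w <> 0) by (intro E0; apply H0; apply dzero; auto). lra. }
    destruct (archimed_cor1 _ H1) as [n [Hn Hn0]]. exists (pred n).
    rewrite Nat.succ_pred_pos; auto.
  - set (m := fold_right Nat.max 0%nat l).
    exists (/ INR (S m)). split. apply Rinv_0_lt_compat, lt_0_INR; lia.
    intros w Nw. destruct (Hl w Nw) as [i [Hi Hu]].
    assert (i <= m)%nat. { unfold m; clear -Hi. induction l; simpl in *. contradiction.
       destruct Hi as [->|Hi]. lia. specialize (IHl Hi). lia. }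
    assert (/ INR (S m) <= / INR (S i)).
    { apply Rinv_le_contravar. apply lt_0_INR; lia. apply le_INR; lia. }
    lra.
Qed.

Lemma H_pos z : ~ N z -> 0 < H z.
Proof. intros nz. destruct (closed_sep z nz) as [r [Hr Hw]].
  destruct (H_lub z) as [_ Hl]. assert (- H z <= - Rmin r 1); [|mins; lra].
  apply Hl. intros s [->|[w [Nw ->]]]. mins; lra.
  specialize (Hw w Nw). unfold D. mins; lra. Qed.

Definition rho x y := Rmin (D x y) (H x + H y).
Lemma rho_pos x y : 0 <= rho x y.
Proof. unfold rho; pose proof (D_pos x y); pose proof (H_ge0 x); pose proof (H_ge0 y); mins; lra. Qed.
Lemma rho_le1 x y : rho x y <= 1.
Proof. unfold rho; pose proof (D_le1 x y); mins; lra. Qed.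
Lemma rho_sym x y : rho x y = rho y x.
Proof. unfold rho; rewrite D_sym, Rplus_comm; auto. Qed.
Lemma rho_xx x : rho x x = 0.
Proof. unfold rho; rewrite D_xx; pose proof (H_ge0 x); mins; lra. Qed.
Lemma rho_tri x y z : rho x z <= rho x y + rho y z.
Proof. unfold rho. pose proof (D_tri x y z). pose proof (H_lip y z). pose proof (H_lip y x).
  rewrite D_sym in H2. pose proof (H_ge0 y). pose proof (H_ge0 x). pose proof (H_ge0 z). mins; lra. Qed.
Lemma rho_N x y : N x -> N y -> rho x y = 0.
Proof. intros; unfold rho; rewrite (H_N x), (H_N y); auto. pose proof (D_pos x y); mins; lra. Qed.
Lemma rho_zero x y : rho x y = 0 -> x = y \/ (N x /\ N y).
Proof. intros E0. destruct (classic (x = y)) as [e|ne]. auto. right.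
  pose proof (D_pos_neq x y ne). unfold rho in E0.
  pose proof (H_ge0 x); pose proof (H_ge0 y).
  assert (H x + H y = 0) by (mins; lra).
  split; apply NNPP; intro nn; pose proof (H_pos _ nn); lra. Qed.
Lemma rho_cont x y x' y' : Rabs (rho x' y' - rho x y) <= dist x x' + dist y y'.
Proof. unfold rho. pose proof (D_tri x' x y'). pose proof (D_tri x y' y).
  pose proof (D_tri x x' y'). pose proof (D_tri x y y').
  pose proof (H_lip x x'). pose proof (H_lip x' x). pose proof (H_lip y y'). pose proof (H_lip y' y).
  pose proof (D_le x x'). pose proof (D_le y y'). rewrite (D_sym x' x) in *. rewrite (D_sym y' y) in *.
  pose proof (D_pos x x'); pose proof (D_pos y y').
  unfold Rabs; destruct Rcase_abs; mins; lra. Qed.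
End Part1.
End P1m.

Section Part2.
Variable X : Type.
Variable dist : X -> X -> R.
Variable mu : R.
Hypothesis mu0 : 0 < mu.
Hypothesis mu1 : mu < 1.
Variable r : X -> X -> R.
Hypothesis r_pos : forall x y, 0 <= r x y.
Hypothesis r_le1 : forall x y, r x y <= 1.

Lemma Rabs_mu : Rabs mu < 1. Proof. rewrite Rabs_pos_eq; lra. Qed.
Lemma mupow_pos k : 0 < mu ^ k. Proof. apply pow_lt; lra. Qed.
Lemma mupow_le1 k : mu ^ k <= 1. Proof. rewrite <- (pow1 k). apply pow_incr; lra. Qed.

Lemma ex_bounded (a : nat -> R) : (forall n, Rabs (a n) <= mu ^ n) -> ex_series a.
Proof. intros Ha. apply (ex_series_le a (fun n => mu ^ n)). intros n; apply Ha.
  apply ex_series_geom. apply Rabs_mu. Qed.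

Definition Sg (h : nat -> X -> X) x y := Series (fun k => mu ^ k * r (h k x) (h k y)).

Lemma term_bound (h : nat -> X -> X) x y n : Rabs (mu ^ n * r (h n x) (h n y)) <= mu ^ n.
Proof. pose proof (mupow_pos n). pose proof (r_pos (h n x) (h n y)). pose proof (r_le1 (h n x) (h n y)).
  rewrite Rabs_pos_eq by nra. nra. Qed.

Lemma ex_Sg (h : nat -> X -> X) x y : ex_series (fun k => mu ^ k * r (h k x) (h k y)).
Proof. apply ex_bounded; intros; apply term_bound. Qed.

Lemma Sg_ext (h h' : nat -> X -> X) x y : (forall k z, h k z = h' k z) -> Sg h x y = Sg h' x y.
Proof. intros E; unfold Sg; apply Series_ext; intros; rewrite !E; auto. Qed.

Lemma Sg_shift (h : nat -> X -> X) x y : Sg h x y = r (h 0%nat x) (h 0%nat y) + mu * Sg (fun k => h (S k)) x y.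
Proof. unfold Sg. rewrite Series_incr_1 by apply ex_Sg. rewrite <- Series_scal_l.
  simpl pow. rewrite Rmult_1_l. f_equal. apply Series_ext; intros; simpl; ring. Qed.

Lemma Sg_ge0 (h : nat -> X -> X) x y : 0 <= Sg h x y.
Proof. unfold Sg. replace 0 with (Series (fun k => 0 * (mu ^ k))).
  apply Series_le. intros; split. lra. pose proof (mupow_pos n); pose proof (r_pos (h n x) (h n y)); nra.
  apply ex_Sg. rewrite Series_scal_l; ring. Qed.

Lemma Sg_ge_term k : forall (h : nat -> X -> X) x y, mu ^ k * r (h k x) (h k y) <= Sg h x y.
Proof. induction k; intros h x y; rewrite Sg_shift.
  - simpl. pose proof (Sg_ge0 (fun k => h (S k)) x y). nra.
  - pose proof (r_pos (h 0%nat x) (h 0%nat y)). specialize (IHk (fun k => h (S k)) x y).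
    simpl in *. nra. Qed.

Lemma Sg_zero_term (h : nat -> X -> X) x y k : Sg h x y = 0 -> r (h k x) (h k y) = 0.
Proof. intros E. pose proof (Sg_ge_term k h x y). pose proof (mupow_pos k).
  pose proof (r_pos (h k x) (h k y)). rewrite E in H. nra. Qed.

Lemma Sg_xx_gen (h : nat -> X -> X) x y : (forall k, r (h k x) (h k y) = 0) -> Sg h x y = 0.
Proof. intros E. unfold Sg. replace 0 with (0 * Series (fun k => mu ^ k)) by ring.
  rewrite <- Series_scal_l. apply Series_ext. intros; rewrite E; ring. Qed.

Hypothesis r_sym : forall x y, r x y = r y x.
Hypothesis r_tri : forall x y z, r x z <= r x y + r y z.

Lemma Sg_sym (h : nat -> X -> X) x y : Sg h x y = Sg h y x.
Proof. unfold Sg; apply Series_ext; intros; rewrite r_sym; auto. Qed.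

Lemma Sg_tri (h : nat -> X -> X) x y z : Sg h x z <= Sg h x y + Sg h y z.
Proof. unfold Sg. rewrite <- Series_plus by apply ex_Sg.
  apply Series_le. intros n; split. pose proof (mupow_pos n); pose proof (r_pos (h n x) (h n z)); nra.
  pose proof (mupow_pos n); pose proof (r_tri (h n x) (h n y) (h n z)); nra.
  apply (ex_series_plus (V := R_NormedModule)); apply ex_Sg. Qed.

Hypothesis r_cont : forall x y x' y', Rabs (r x' y' - r x y) <= dist x x' + dist y y'.

Lemma fin_cont (h : nat -> X -> X) (hc : forall k, continuous_map dist (h k)) K eta x :
  0 < eta -> exists delta, 0 < delta /\ forall x', dist x x' < delta ->
     forall k, (k <= K)%nat -> dist (h k x) (h k x') < eta.
Proof. intros Heta. induction K.
  - destruct (hc 0%nat x eta Heta) as [d [d0 Hd]]. exists d; split; auto.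
    intros x' Hx k Hk. assert (k = 0%nat) by lia. subst; auto.
  - destruct IHK as [d1 [d10 Hd1]]. destruct (hc (S K) x eta Heta) as [d2 [d20 Hd2]].
    exists (Rmin d1 d2). split. apply Rmin_pos; auto.
    intros x' Hx k Hk. destruct (Nat.eq_dec k (S K)) as [->|ne].
    apply Hd2. pose proof (Rmin_r d1 d2); lra.
    apply Hd1. pose proof (Rmin_l d1 d2); lra. lia. Qed.

Lemma sum_bound (c : nat -> R) b n : (forall k, (k <= n)%nat -> Rabs (c k) <= b) ->
  Rabs (sum_f_R0 c n) <= INR (S n) * b.
Proof. induction n; intros Hc; simpl sum_f_R0.
  - simpl. specialize (Hc 0%nat (le_n 0)). lra.
  - rewrite S_INR. eapply Rle_trans. apply Rabs_triang.
    assert (Rabs (sum_f_R0 c n) <= INR (S n) * b) by (apply IHn; intros; apply Hc; lia).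
    specialize (Hc (S n) (le_n _)). lra. Qed.

Lemma Sg_cont (h : nat -> X -> X) (hc : forall k, continuous_map dist (h k)) x y eps :
  0 < eps -> exists delta, 0 < delta /\ forall x' y', dist x x' < delta -> dist y y' < delta ->
    Rabs (Sg h x' y' - Sg h x y) < eps.
Proof. intros He.
  assert (0 < eps * (1 - mu) / 2) by (apply Rdiv_lt_0_compat; nra).
  destruct (pow_lt_1_zero mu (Rabs_mu) _ H) as [N0 HN0].
  set (K := S N0). assert (HK : mu ^ K < eps * (1 - mu) / 2).
  { specialize (HN0 K ltac:(unfold K; lia)). rewrite Rabs_pos_eq in HN0; auto. left; apply mupow_pos. }
  set (eta := eps / (8 * INR K)).
  assert (0 < INR K) by (apply lt_0_INR; unfold K; lia).
  assert (eta0 : 0 < eta) by (unfold eta; apply Rdiv_lt_0_compat; lra).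
  destruct (fin_cont h hc (pred K) eta x eta0) as [d1 [d10 Hd1]].
  destruct (fin_cont h hc (pred K) eta y eta0) as [d2 [d20 Hd2]].
  exists (Rmin d1 d2); split. apply Rmin_pos; auto.
  intros x' y' Hx Hy. pose proof (Rmin_l d1 d2); pose proof (Rmin_r d1 d2).
  unfold Sg. rewrite <- Series_minus by apply ex_Sg.
  set (c := fun n => mu ^ n * r (h n x') (h n y') - mu ^ n * r (h n x) (h n y)).
  assert (Hcb : forall n, Rabs (c n) <= mu ^ n).
  { intros n. unfold c. pose proof (mupow_pos n).
    pose proof (r_pos (h n x) (h n y)); pose proof (r_le1 (h n x) (h n y)).
    pose proof (r_pos (h n x') (h n y')); pose proof (r_le1 (h n x') (h n y')).
    unfold Rabs; destruct Rcase_abs; nra. }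
  assert (exc : ex_series c) by (apply ex_bounded; auto).
  rewrite (Series_incr_n c K) by (unfold K; lia || auto).
  assert (Hf : Rabs (sum_f_R0 c (pred K)) <= INR (S (pred K)) * (2 * eta)).
  { apply sum_bound. intros k Hk. unfold c. rewrite <- Rmult_minus_distr_l.
    rewrite Rabs_mult, (Rabs_pos_eq (mu ^ k)) by (left; apply mupow_pos).
    specialize (r_cont (h k x) (h k y) (h k x') (h k y')).
    specialize (Hd1 x' ltac:(lra) k Hk). specialize (Hd2 y' ltac:(lra) k Hk).
    assert (mu ^ k <= 1) by (apply mupow_le1).
    pose proof (Rabs_pos (r (h k x') (h k y') - r (h k x) (h k y))).
    pose proof (mupow_pos k). nra. }
  replace (S (pred K)) with K in Hf by (unfold K; lia).
  assert (Ht : Rabs (Series (fun k => c (K + k)%nat)) <= mu ^ K / (1 - mu)).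
  { eapply Rle_trans. apply Series_Rabs. apply ex_bounded. intros n.
    rewrite Rabs_Rabsolu. eapply Rle_trans. apply Hcb. rewrite pow_add.
    pose proof (mupow_pos n). assert (mu ^ K <= 1) by (apply mupow_le1). nra.
    unfold Rdiv. rewrite <- Series_geom by apply Rabs_mu. rewrite <- Series_scal_l.
    apply Series_le. intros n; split. apply Rabs_pos. rewrite <- pow_add. apply Hcb.
    apply (ex_series_scal_l (V := R_NormedModule)). apply ex_series_geom, Rabs_mu. }
  eapply Rle_lt_trans. apply Rabs_triang.
  assert (INR K * (2 * eta) = eps / 4) by (unfold eta; field; lra).
  assert (mu ^ K / (1 - mu) < eps / 2).
  { apply (Rmult_lt_reg_r (1 - mu)). lra. unfold Rdiv. rewrite Rmult_assoc, Rinv_l by lra. lra. }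
  lra.
Qed.
End Part2.

Lemma iter_succ_r {X} (f : X -> X) k z : Nat.iter (S k) f z = Nat.iter k f (f z).
Proof. induction k; simpl in *; auto. rewrite <- IHk; auto. Qed.

Lemma iter_cont {X} dist (f : X -> X) : continuous_map dist f -> forall k, continuous_map dist (Nat.iter k f).
Proof. intros Hf k; induction k; simpl.
  - intros x eps He; exists eps; auto.
  - intros x eps He. destruct (Hf (Nat.iter k f x) eps He) as [d1 [d10 H1]].
    destruct (IHk x d1 d10) as [d2 [d20 H2]]. exists d2; split; auto. intros y Hy; apply H1, H2, Hy. Qed.

Lemma iter_inj {X} (f g : X -> X) : (forall x, g (f x) = x) -> forall k a b, Nat.iter k f a = Nat.iter k f b -> a = b.
Proof. intros Hgf k; induction k; simpl; intros a b E; auto.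
  apply IHk. rewrite <- (Hgf (Nat.iter k f a)), E, Hgf; auto. Qed.

Theorem mainTheorem16 (X : Type) (dist : X -> X -> R) (f g : X -> X)
    (L : X -> Prop) :
  is_metric dist ->
  is_homeomorphism dist f g ->
  isolated_set dist f g L ->
  exists (N : X -> Prop) (d : X -> X -> R),
    catenary_pseudo_metric dist f g L N d.
Proof.
  intros Hm [Hgf [Hfg [Hfc Hgc]]] [Hinv [N [Hc [Hnb Hisol]]]].
  assert (LN : forall x, L x -> N x).
  { destruct Hnb as [U [_ [HU1 HU2]]]. intros x Lx; apply HU2, HU1, Lx. }
  assert (Lf : forall k x, L x -> L (Nat.iter k f x)).
  { induction k; simpl; intros; auto. apply (proj1 (Hinv _)); auto. }
  assert (Lg : forall k x, L x -> L (Nat.iter k g x)).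
  { induction k; simpl; intros; auto. apply (proj2 (Hinv _)). rewrite Hfg. auto. }
  assert (s5 : sqrt 5 * sqrt 5 = 5) by (apply sqrt_sqrt; lra).
  assert (s5p : 0 <= sqrt 5) by apply sqrt_pos.
  set (mu := (3 - sqrt 5) / 2).
  assert (mu0 : 0 < mu) by (unfold mu; nra).
  assert (mu1 : mu < 1) by (unfold mu; nra).
  assert (mueq : mu * mu = 3 * mu - 1) by (unfold mu; nra).
  set (r := P1m.rho X dist Hm N).
  assert (r_pos : forall x y, 0 <= r x y) by apply P1m.rho_pos.
  assert (r_le1 : forall x y, r x y <= 1) by apply P1m.rho_le1.
  assert (r_sym : forall x y, r x y = r y x) by apply P1m.rho_sym.
  assert (r_tri : forall x y z, r x z <= r x y + r y z) by apply P1m.rho_tri.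
  assert (r_xx : forall x, r x x = 0) by apply P1m.rho_xx.
  assert (r_cont : forall x y x' y', Rabs (r x' y' - r x y) <= dist x x' + dist y y') by apply P1m.rho_cont.
  assert (r_N : forall x y, N x -> N y -> r x y = 0) by (apply P1m.rho_N).
  assert (r_zero : forall x y, r x y = 0 -> x = y \/ (N x /\ N y)) by (apply P1m.rho_zero; auto).
  set (P := Sg X mu r (fun k => Nat.iter k f)).
  set (Q := Sg X mu r (fun k => Nat.iter (S k) g)).
  assert (Pge : forall x y, 0 <= P x y) by (intros; apply Sg_ge0; auto).
  assert (Qge : forall x y, 0 <= Q x y) by (intros; apply Sg_ge0; auto).
  exists N, (fun x y => P x y + mu * Q x y).
  split; [split; auto|]. split; [|split; [|split]].
  -
    split; [|split].
    + intros x _. unfold P, Q. rewrite !Sg_xx_gen; auto; lra.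
    + intros x y _ _. unfold P, Q. rewrite (Sg_sym _ _ _ r_sym _ x y), (Sg_sym _ _ _ r_sym _ x y). auto.
    + intros x y z _ _ _. unfold P, Q.
      pose proof (Sg_tri X mu mu0 mu1 r r_pos r_le1 r_tri (fun k => Nat.iter k f) x y z).
      pose proof (Sg_tri X mu mu0 mu1 r r_pos r_le1 r_tri (fun k => Nat.iter (S k) g) x y z). nra.
  -
    intros x y eps _ _ He.
    destruct (Sg_cont X dist mu mu0 mu1 r r_pos r_le1 r_cont (fun k => Nat.iter k f)
       (iter_cont dist f Hfc) x y (eps/2) ltac:(lra)) as [d1 [d10 H1]].
    destruct (Sg_cont X dist mu mu0 mu1 r r_pos r_le1 r_cont (fun k => Nat.iter (S k) g)
       (fun k => iter_cont dist g Hgc (S k)) x y (eps/2) ltac:(lra)) as [d2 [d20 H2]].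
    exists (Rmin d1 d2). split. apply Rmin_pos; auto.
    intros x' y' _ _ Hx Hy. pose proof (Rmin_l d1 d2); pose proof (Rmin_r d1 d2).
    specialize (H1 x' y' ltac:(lra) ltac:(lra)). specialize (H2 x' y' ltac:(lra) ltac:(lra)).
    fold P Q in H1, H2.
    replace (P x' y' + mu * Q x' y' - (P x y + mu * Q x y)) with
      ((P x' y' - P x y) + mu * (Q x' y' - Q x y)) by ring.
    eapply Rle_lt_trans. apply Rabs_triang. rewrite Rabs_mult, (Rabs_pos_eq mu) by lra.
    pose proof (Rabs_pos (Q x' y' - Q x y)). nra.
  -
    intros x y Nx Ny _ _ _ _. unfold ddot.
    assert (rxy : r x y = 0) by auto.
    assert (EP : P x y = r x y + mu * P (f x) (f y)).
    { unfold P. rewrite Sg_shift by auto.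
      change (r x y + mu * Sg X mu r (fun k => Nat.iter (S k) f) x y = r x y + mu * Sg X mu r (fun k z => Nat.iter k f (f z)) x y).
      rewrite (Sg_ext _ _ _ (fun k => Nat.iter (S k) f) (fun k z => Nat.iter k f (f z))); auto.
      intros; apply iter_succ_r. }
    assert (EPg : P (g x) (g y) = r (g x) (g y) + mu * P x y).
    { unfold P. change (Sg X mu r (fun k z => Nat.iter k f (g z)) x y = r (g x) (g y) + mu * Sg X mu r (fun k => Nat.iter k f) x y).
      rewrite Sg_shift by auto.
      change (r (g x) (g y) + mu * Sg X mu r (fun k z => Nat.iter (S k) f (g z)) x y = r (g x) (g y) + mu * Sg X mu r (fun k => Nat.iter k f) x y).
      rewrite (Sg_ext _ _ _ (fun k z => Nat.iter (S k) f (g z)) (fun k => Nat.iter k f)); auto.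
      intros; rewrite iter_succ_r, Hfg; auto. }
    assert (EQf : Q (f x) (f y) = r x y + mu * Q x y).
    { unfold Q. change (Sg X mu r (fun k z => Nat.iter (S k) g (f z)) x y = r x y + mu * Sg X mu r (fun k => Nat.iter (S k) g) x y).
      rewrite (Sg_ext _ _ _ _ (fun k => Nat.iter k g)). rewrite Sg_shift by auto. auto.
      intros; rewrite iter_succ_r, Hgf; auto. }
    assert (EQg : Q x y = r (g x) (g y) + mu * Q (g x) (g y)).
    { unfold Q. rewrite Sg_shift by auto.
      change (r (g x) (g y) + mu * Sg X mu r (fun k => Nat.iter (S (S k)) g) x y = r (g x) (g y) + mu * Sg X mu r (fun k z => Nat.iter (S k) g (g z)) x y).
      rewrite (Sg_ext _ _ _ (fun k => Nat.iter (S (S k)) g) (fun k z => Nat.iter (S k) g (g z))); auto.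
      intros; rewrite (iter_succ_r g (S k)); auto. }
    rewrite rxy in *.
    apply (Rmult_eq_reg_l mu); [|lra].
    assert (mu * P (f x) (f y) = P x y) by lra.
    assert (mu * Q (g x) (g y) = Q x y - r (g x) (g y)) by lra.
    replace (mu * (P (f x) (f y) + mu * Q (f x) (f y) - 2 * (P x y + mu * Q x y) +
        (P (g x) (g y) + mu * Q (g x) (g y))))
      with (mu * P (f x) (f y) + mu * mu * Q (f x) (f y) - 2 * mu * (P x y + mu * Q x y) +
        mu * P (g x) (g y) + mu * (mu * Q (g x) (g y))) by ring.
    rewrite H, H0, EQf, EPg. replace (mu * mu * (0 + mu * Q x y)) with (mu * mu * mu * Q x y) by ring.
    rewrite !mueq. ring_simplify. replace (mu ^ 2) with (mu * mu) by ring. rewrite mueq. ring.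
  -
    intros x y Nx Ny. split.
    + intros E0. destruct (classic (x = y)) as [e|ne]; [auto|right].
      assert (P x y = 0) by (pose proof (Pge x y); pose proof (Qge x y); nra).
      assert (Q x y = 0) by (pose proof (Pge x y); pose proof (Qge x y); nra).
      assert (Hf : forall k, N (Nat.iter k f x) /\ N (Nat.iter k f y)).
      { intros k. pose proof (Sg_zero_term X mu mu0 mu1 r r_pos r_le1 _ x y k H) as Z.
        destruct (r_zero _ _ Z) as [e|]; auto. exfalso; apply ne; exact (iter_inj f g Hgf k _ _ e). }
      assert (Hg : forall k, N (Nat.iter (S k) g x) /\ N (Nat.iter (S k) g y)).
      { intros k. pose proof (Sg_zero_term X mu mu0 mu1 r r_pos r_le1 _ x y k H0) as Z.
        destruct (r_zero _ _ Z) as [e|]; auto. exfalso; apply ne; eapply iter_inj; eauto. }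
      split; apply Hisol; intros [|p|p]; simpl.
      * apply (Hf 0%nat).
      * apply (Hf (Pos.to_nat p)).
      * pose proof (Pos2Nat.is_pos p). replace (Pos.to_nat p) with (S (pred (Pos.to_nat p))) by lia. apply Hg.
      * apply (Hf 0%nat).
      * apply (Hf (Pos.to_nat p)).
      * pose proof (Pos2Nat.is_pos p). replace (Pos.to_nat p) with (S (pred (Pos.to_nat p))) by lia. apply Hg.
    + intros [->|[Lx Ly]].
      * unfold P, Q. rewrite !Sg_xx_gen; auto; lra.
      * unfold P, Q. rewrite !Sg_xx_gen; auto; try lra; intros k; apply r_N; apply LN; auto.
Qed.
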